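(* Let $L\geq 2$, $d,M,J,N\geq 1$, let $X\in\mathbb{R}^{d\times N}$, and let $A\in\mathbb{R}^{J\times N}$ have one-hot columns. Suppose $\sigma:\mathbb{R}\to\mathbb{R}$ is Lipschitz continuous, i.e. $|\sigma(z_1)-\sigma(z_2)|\leq B|z_1-z_2|$ for some $B>0$ and all $z_1,z_2\in\mathbb{R}$. Then for all $W_1\in\mathbb{R}^{M\times d}$, $W_2,\dots,W_{L-1}\in\mathbb{R}^{M\times M}$, $W_L\in\mathbb{R}^{J\times M}$, $b_1,\dots,b_{L-1}\in\mathbb{R}^{M}$ and $c_1,\dots,c_{L-1}\in\mathbb{R}^{M\times N}$, $$\mathcal{L}(\phi_{\mathrm{FNN}}(X;\theta),A)\leq C_B\cdot\sqrt{L-1}\cdot \mathcal{L}^{\mathrm{FNN}}_{\mathrm S},$$ where $C_B=\max\{\sqrt2,\,2B,\,2B^{L-1}\}$.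
   Context: Softmax and cross-entropy: for $\boldsymbol z\in\mathbb{R}^J$ and one-hot $\boldsymbol\alpha\in\mathbb{R}^J$ (entries in $\{0,1\}$ summing to $1$), $\ell(\boldsymbol z,\boldsymbol\alpha)=-\sum_j\alpha_j\ln\big(e^{z_j}/\sum_{k}e^{z_k}\big)$. For $Z=[\boldsymbol z_1\cdots\boldsymbol z_N]$, $A=[\boldsymbol\alpha_1\cdots\boldsymbol\alpha_N]$: $\mathcal{L}_{\mathrm{vec}}(Z,A)=[\ell(\boldsymbol z_n,\boldsymbol\alpha_n)]_{n=1}^N\in\mathbb{R}^N$ and $\mathcal{L}(Z,A)=\frac1N\sum_{n=1}^N\ell(\boldsymbol z_n,\boldsymbol\alpha_n)$. The fully connected network with parameters $\theta=\{W_L,W_l,b_l\}_{l=1}^{L-1}$ is $\phi_{\mathrm{FNN}}(\boldsymbol x;\theta)=W_L\sigma(W_{L-1}\sigma(\cdots\sigma(W_1\boldsymbol x+b_1)\cdots)+b_{L-1})$ with $\sigma$ applied entrywise, and $\phi_{\mathrm{FNN}}(X;\theta)$ is the matrix whose $n$-th column is $\phi_{\mathrm{FNN}}$ applied to the $n$-th column of $X$. With $\mathbf 1\in\mathbb{R}^N$ the all-ones vector, set weights $\omega_l=\prod_{j=l+1}^{L}\|W_j\|_{\mathrm F}^2$ for $l=1,\dots,L-1$, and $$S=\|\mathcal{L}_{\mathrm{vec}}(W_L\sigma(c_{L-1}),A)\|_2^2+\sum_{l=2}^{L-1}\omega_l\|W_l\sigma(c_{l-1})+b_l\mathbf 1^\top-c_l\|_{\mathrm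 F}^2+\omega_1\|W_1X+b_1\mathbf 1^\top-c_1\|_{\mathrm F}^2,$$ and the layer separation loss $\mathcal{L}^{\mathrm{FNN}}_{\mathrm S}=\frac{1}{\sqrt N}S^{1/2}$. *)

(* Defs.v *)
From HB Require Import structures.
From mathcomp Require Import all_boot all_order all_algebra.
From mathcomp Require Import all_classical all_reals all_analysis.
Set Implicit Arguments. Unset Strict Implicit. Unset Printing Implicit Defensive.
Import Order.TTheory GRing.Theory Num.Theory.
Local Open Scope ring_scope.

Section Defs.
Variable R : realType.

Definition frob2 m n (A : 'M[R]_(m, n)) : R := \sum_(i < m) \sum_(j < n) A i j ^+ 2.

Definition one_hot J (a : 'cV[R]_J) : Prop :=
  (forall j, a j 0 = 0 \/ a j 0 = 1) /\ \sum_(j < J) a j 0 = 1.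

Definition ce_loss J (z a : 'cV[R]_J) : R :=
  - \sum_(j < J) a j 0 * ln (expR (z j 0) / \sum_(k < J) expR (z k 0)).

Definition Lvec J N (Z A : 'M[R]_(J, N)) (n : 'I_N) : R := ce_loss (col n Z) (col n A).

Definition Lmean J N (Z A : 'M[R]_(J, N)) : R := N%:R^-1 * \sum_(n < N) Lvec Z A n.

Definition act (sigma : R -> R) m n (Z : 'M[R]_(m, n)) : 'M[R]_(m, n) := map_mx sigma Z.

(* Network parameters: W1 : M x d, W l : M x M (used for l = 2..L-1),
   WL : J x M, b l : M (used for l = 1..L-1).
   hidden k x = output of hidden layer k+1 on input x. *)
Fixpoint hidden (sigma : R -> R) d M (W1 : 'M[R]_(M, d)) (W : nat -> 'M[R]_M)
  (b : nat -> 'cV[R]_M) (k : nat) (x : 'cV[R]_d) : 'cV[R]_M :=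
  match k with
  | 0 => act sigma (W1 *m x + b 1%N)
  | k'.+1 => act sigma (W k.+1 *m hidden sigma W1 W b k' x + b k.+1)
  end.

Definition phi_FNN (sigma : R -> R) (L : nat) d M J (W1 : 'M[R]_(M, d))
  (W : nat -> 'M[R]_M) (WL : 'M[R]_(J, M)) (b : nat -> 'cV[R]_M)
  (x : 'cV[R]_d) : 'cV[R]_J :=
  WL *m hidden sigma W1 W b (L - 2) x.

Definition phi_FNN_mx (sigma : R -> R) (L : nat) d M J N (W1 : 'M[R]_(M, d))
  (W : nat -> 'M[R]_M) (WL : 'M[R]_(J, M)) (b : nat -> 'cV[R]_M)
  (X : 'M[R]_(d, N)) : 'M[R]_(J, N) :=
  \matrix_(j < J, n < N) phi_FNN sigma L W1 W WL b (col n X) j 0.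

Definition frobW (L : nat) d M J (W1 : 'M[R]_(M, d)) (W : nat -> 'M[R]_M)
  (WL : 'M[R]_(J, M)) (j : nat) : R :=
  if j == 1%N then frob2 W1 else if j == L then frob2 WL else frob2 (W j).

Definition omega (L : nat) d M J (W1 : 'M[R]_(M, d)) (W : nat -> 'M[R]_M)
  (WL : 'M[R]_(J, M)) (l : nat) : R :=
  \prod_(l.+1 <= j < L.+1) frobW L W1 W WL j.

Definition ones_row N : 'rV[R]_N := const_mx 1.

Definition S_sep (sigma : R -> R) (L : nat) d M J N (X : 'M[R]_(d, N)) (A : 'M[R]_(J, N))
  (W1 : 'M[R]_(M, d)) (W : nat -> 'M[R]_M) (WL : 'M[R]_(J, M))
  (b : nat -> 'cV[R]_M) (c : nat -> 'M[R]_(M, N)) : R :=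
  \sum_(n < N) (Lvec (WL *m act sigma (c (L.-1))) A n) ^+ 2
  + \sum_(2 <= l < L) omega L W1 W WL l *
        frob2 (W l *m act sigma (c l.-1) + b l *m ones_row N - c l)
  + omega L W1 W WL 1 * frob2 (W1 *m X + b 1%N *m ones_row N - c 1%N).

Definition LS_FNN (sigma : R -> R) (L : nat) d M J N (X : 'M[R]_(d, N)) (A : 'M[R]_(J, N))
  (W1 : 'M[R]_(M, d)) (W : nat -> 'M[R]_M) (WL : 'M[R]_(J, M))
  (b : nat -> 'cV[R]_M) (c : nat -> 'M[R]_(M, N)) : R :=
  (Num.sqrt N%:R)^-1 * Num.sqrt (S_sep sigma L X A W1 W WL b c).

End Defs.

(* Main.v *)
Require Import Defs.
From HB Require Import structures.
From mathcomp Require Import all_boot all_order all_algebra.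
From mathcomp Require Import all_classical all_reals all_analysis.
From mathcomp Require Import ring lra.
Set Implicit Arguments. Unset Strict Implicit.
Import Order.TTheory GRing.Theory Num.Theory.
Local Open Scope ring_scope.

Lemma CS2 (R : realType) (I : Type) (r : seq I) (x y : I -> R) :
  (\sum_(i <- r) x i * y i) ^+ 2 <= (\sum_(i <- r) x i ^+ 2) * (\sum_(i <- r) y i ^+ 2).
Proof.
have H : 0 <= \sum_(i <- r) \sum_(j <- r) (x i * y j - x j * y i) ^+ 2.
  by apply: sumr_ge0 => i _; apply: sumr_ge0 => j _; exact: sqr_ge0.
have E : \sum_(i <- r) \sum_(j <- r) (x i * y j - x j * y i) ^+ 2 =
   \sum_(i <- r) \sum_(j <- r) (x i ^+ 2 * y j ^+ 2)
 + \sum_(i <- r) \sum_(j <- r) (y i ^+ 2 * x j ^+ 2)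
 - 2 * \sum_(i <- r) \sum_(j <- r) ((x i * y i) * (x j * y j)).
  rewrite mulr_sumr -!big_split -sumrB /=; apply: eq_bigr => i _.
  rewrite mulr_sumr -!big_split -sumrB /=; apply: eq_bigr => j _.
  ring.
rewrite E -!big_distrlr /= in H.
rewrite expr2; lra.
Qed.

Lemma CS (R : realType) (I : Type) (r : seq I) (x y : I -> R) :
  \sum_(i <- r) x i * y i <= Num.sqrt (\sum_(i <- r) x i ^+ 2) * Num.sqrt (\sum_(i <- r) y i ^+ 2).
Proof.
rewrite -sqrtrM; last by apply: sumr_ge0 => i _; exact: sqr_ge0.
apply: le_trans (ler_norm _) _.
rewrite -sqrtr_sqr ler_sqrt; first exact: CS2.
by apply: mulr_ge0; apply: sumr_ge0 => i _; exact: sqr_ge0.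
Qed.


Lemma sumexp_gt0 (R : realType) J (z : 'cV[R]_J) : (0 < J)%N -> 0 < \sum_(k < J) expR (z k 0).
Proof.
move=> hJ; rewrite (bigD1 (Ordinal hJ)) //=.
apply: ltr_pwDl; first exact: expR_gt0.
by apply: sumr_ge0 => i _; apply: ltW; exact: expR_gt0.
Qed.

Lemma ce_form (R : realType) J (z a : 'cV[R]_J) : (0 < J)%N -> \sum_(j < J) a j 0 = 1 ->
  ce_loss z a = - \sum_(j < J) a j 0 * z j 0 + ln (\sum_(k < J) expR (z k 0)).
Proof.
move=> hJ ha; rewrite /ce_loss.
have S0 := sumexp_gt0 z hJ.
set S := \sum_(k < J) _ in S0 *.
have E : forall j : 'I_J, a j 0 * ln (expR (z j 0) / S) = a j 0 * z j 0 - a j 0 * ln S.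
  move=> j; rewrite lnM ?posrE ?expR_gt0 ?invr_gt0 // lnV ?posrE // expRK; ring.
rewrite (eq_bigr _ (fun j _ => E j)) sumrB -mulr_suml ha mul1r; ring.
Qed.

Lemma ce_lip (R : realType) J (z z' a : 'cV[R]_J) : (0 < J)%N -> one_hot a ->
  ce_loss z' a <= ce_loss z a + Num.sqrt 2 * Num.sqrt (\sum_(j < J) (z' j 0 - z j 0) ^+ 2).
Proof.
move=> hJ [ha01 ha1].
rewrite !ce_form //.
have S0 := sumexp_gt0 z hJ; have S0' := sumexp_gt0 z' hJ.
set S := \sum_(k < J) expR (z k 0) in S0 *.
set S' := \sum_(k < J) expR (z' k 0) in S0' *.
pose d k := z k 0 - z' k 0.
pose p k := expR (z' k 0) / S'.
pose m := \sum_(k < J) p k * d k.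
have mdef : m = \sum_(k < J) p k * d k by [].
clearbody m.
have hm : m * S' = \sum_(k < J) expR (z' k 0) * d k.
  rewrite mdef mulr_suml; apply: eq_bigr => k _; rewrite /p; field.
  by rewrite gt_eqF.
have C1 : expR m * S' <= S.
  have -> : S = \sum_(k < J) expR (z' k 0) * expR (d k).
    by apply: eq_bigr => k _; rewrite -expRD /d; congr expR; ring.
  have : \sum_(k < J) expR (z' k 0) * (expR m * (1 + (d k - m))) <= \sum_(k < J) expR (z' k 0) * expR (d k).
    apply: ler_sum => k _; apply: ler_wpM2l; first exact: ltW (expR_gt0 _).
    have -> : expR (d k) = expR m * expR (d k - m) by rewrite -expRD; congr expR; ring.
    by apply: ler_wpM2l; [exact: ltW (expR_gt0 _)| exact: expR_ge1Dx].
  move=> H; apply: le_trans H; rewrite le_eqVlt; apply/orP; left; apply/eqP.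
  have -> : \sum_(k < J) expR (z' k 0) * (expR m * (1 + (d k - m))) =
     expR m * (\sum_(k < J) expR (z' k 0) + \sum_(k < J) expR (z' k 0) * d k - m * \sum_(k < J) expR (z' k 0)).
    rewrite [m * _]mulr_sumr -big_split /= -sumrN -big_split /= mulr_sumr; apply: eq_bigr => k _; ring.
  rewrite -/S' -hm; ring.
have C2 : m + ln S' <= ln S.
  rewrite -[m]expRK -lnM ?posrE ?expR_gt0 //.
  by rewrite ler_ln ?posrE ?mulr_gt0 ?expR_gt0.
have hp1 : \sum_(k < J) p k = 1.
  by rewrite /p -mulr_suml divff // gt_eqF.
have C3 : \sum_(k < J) (p k - a k 0) ^+ 2 <= 2.
  have : \sum_(k < J) (p k - a k 0) ^+ 2 <= \sum_(k < J) (p k + a k 0).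
    apply: ler_sum => k _.
    have p0 : 0 <= p k by rewrite /p divr_ge0 // ltW // expR_gt0.
    have p1 : p k <= 1.
      rewrite /p ler_pdivrMr // mul1r /S' (bigD1 k) //= lerDl.
      by apply: sumr_ge0 => i _; apply: ltW; exact: expR_gt0.
    by case: (ha01 k) => ->; nra.
  by rewrite big_split /= hp1 ha1 => H; apply: le_trans H _; lra.
have C4 : \sum_(k < J) (p k - a k 0) * (z' k 0 - z k 0) <=
    Num.sqrt 2 * Num.sqrt (\sum_(j < J) (z' j 0 - z j 0) ^+ 2).
  apply: le_trans (CS _ _ _) _.
  by apply: ler_wpM2r; [exact: sqrtr_ge0 | rewrite ler_sqrt].
have E : \sum_(k < J) (p k - a k 0) * (z' k 0 - z k 0) =
   - m + \sum_(k < J) a k 0 * z k 0 - \sum_(k < J) a k 0 * z' k 0.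
  rewrite mdef -!sumrN -!big_split /=; apply: eq_bigr => k _; rewrite /d; ring.
rewrite E in C4; lra.
Qed.


Lemma frob2E {R : realType} m n (A : 'M[R]_(m, n)) :
  frob2 A = \sum_(p : 'I_m * 'I_n) A p.1 p.2 ^+ 2.
Proof. by rewrite /frob2 pair_big. Qed.

Lemma frob2_ge0 {R : realType} m n (A : 'M[R]_(m, n)) : 0 <= frob2 A.
Proof. by apply: sumr_ge0 => i _; apply: sumr_ge0 => j _; exact: sqr_ge0. Qed.

Lemma F_add {R : realType} m n (A B : 'M[R]_(m, n)) :
  Num.sqrt (frob2 (A + B)) <= Num.sqrt (frob2 A) + Num.sqrt (frob2 B).
Proof.
have HC := CS (index_enum (('I_m * 'I_n)%type)) (fun p => A p.1 p.2) (fun p => B p.1 p.2).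
have E : frob2 (A + B) = frob2 A + 2 * \sum_(p : 'I_m * 'I_n) A p.1 p.2 * B p.1 p.2 + frob2 B.
  rewrite !frob2E mulr_sumr -!big_split /=; apply: eq_bigr => p _; rewrite mxE; ring.
rewrite -!frob2E in HC.
have a0 := sqrtr_ge0 (frob2 A); have b0 := sqrtr_ge0 (frob2 B).
rewrite -[X in _ <= X]ger0_norm ?addr_ge0 // -sqrtr_sqr ler_sqrt ?sqr_ge0 // E.
have hA := sqr_sqrtr (frob2_ge0 A); have hB := sqr_sqrtr (frob2_ge0 B).
rewrite -{1}hA -{1}hB; lra.
Qed.

Lemma frob2_mul {R : realType} m n p (W : 'M[R]_(m, n)) (D : 'M[R]_(n, p)) :
  frob2 (W *m D) <= frob2 W * frob2 D.
Proof.
rewrite /frob2 mulr_suml.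
apply: ler_sum => i _.
have -> : (\sum_(j < n) W i j ^+ 2) * \sum_(k < n) \sum_(l < p) D k l ^+ 2 =
   \sum_(l < p) ((\sum_(j < n) W i j ^+ 2) * \sum_(k < n) D k l ^+ 2).
  by rewrite exchange_big mulr_sumr.
apply: ler_sum => l _; rewrite mxE.
exact: CS2.
Qed.

Lemma frob_mul {R : realType} m n p (W : 'M[R]_(m, n)) (D : 'M[R]_(n, p)) :
  Num.sqrt (frob2 (W *m D)) <= Num.sqrt (frob2 W) * Num.sqrt (frob2 D).
Proof. by rewrite -sqrtrM ?frob2_ge0 // ler_sqrt ?mulr_ge0 ?frob2_ge0 // frob2_mul. Qed.

Lemma act_lip {R : realType} (sigma : R -> R) (B : R) m n (U C : 'M[R]_(m, n)) :
  0 < B -> (forall z1 z2 : R, `|sigma z1 - sigma z2| <= B * `|z1 - z2|) ->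
  Num.sqrt (frob2 (act sigma U - act sigma C)) <= B * Num.sqrt (frob2 (U - C)).
Proof.
move=> hB hL.
have H : frob2 (act sigma U - act sigma C) <= B ^+ 2 * frob2 (U - C).
  rewrite /frob2 mulr_sumr; apply: ler_sum => i _.
  rewrite mulr_sumr; apply: ler_sum => j _.
  rewrite !mxE.
  have h := hL (U i j) (C i j).
  have e1 := real_normK (num_real (sigma (U i j) - sigma (C i j))).
  have e2 := real_normK (num_real (U i j - C i j)).
  have n1 := normr_ge0 (sigma (U i j) - sigma (C i j)).
  have n2 := normr_ge0 (U i j - C i j).
  rewrite -e1 -e2; nra.
apply: le_trans (_ : Num.sqrt (B ^+ 2 * frob2 (U - C)) <= _).
  by rewrite ler_sqrt // mulr_ge0 ?sqr_ge0 ?frob2_ge0.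
by rewrite sqrtrM ?sqr_ge0 // sqrtr_sqr ger0_norm // ltW.
Qed.


Section Net.
Variables (R : realType) (d M J N m : nat) (sigma : R -> R) (X : 'M[R]_(d, N))
  (W1 : 'M[R]_(M, d)) (W : nat -> 'M[R]_M) (WL : 'M[R]_(J, M))
  (b : nat -> 'cV[R]_M) (c : nat -> 'M[R]_(M, N)).

Fixpoint Ufix (k : nat) : 'M[R]_(M, N) :=
  match k with
  | 0 => W1 *m X + b 1%N *m ones_row R N
  | k'.+1 => W k'.+2 *m act sigma (Ufix k') + b k'.+2 *m ones_row R N
  end.

Definition efix (k : nat) : 'M[R]_(M, N) :=
  match k with
  | 0 => W1 *m X + b 1%N *m ones_row R N - c 1%N
  | k'.+1 => W k'.+2 *m act sigma (c k'.+1) + b k'.+2 *m ones_row R N - c k'.+2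
  end.

Lemma hidden_col k (n : 'I_N) (i : 'I_M) :
  hidden sigma W1 W b k (col n X) i 0 = act sigma (Ufix k) i n.
Proof.
elim: k i => [|k IH] i /=; rewrite !mxE; congr sigma; rewrite big_ord1 /ones_row !mxE mulr1;
  congr (_ + _); apply: eq_bigr => j _; rewrite ?mxE ?IH ?mxE //.
Qed.

Lemma phi_eq : phi_FNN_mx sigma m.+2 W1 W WL b X = WL *m act sigma (Ufix m).
Proof.
apply/matrixP => j n; rewrite mxE /phi_FNN subn2 !mxE.
by apply: eq_bigr => k _; rewrite hidden_col.
Qed.

Definition om := omega m.+2 W1 W WL.

Lemma frobW_ge0 j : 0 <= frobW m.+2 W1 W WL j.
Proof. by rewrite /frobW; case: ifP => _; [|case: ifP => _]; exact: frob2_ge0. Qed.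

Lemma om_ge0 l : 0 <= om l.
Proof. by apply: prodr_ge0 => j _; exact: frobW_ge0. Qed.

Lemma om_rec k : (k < m)%N -> om k.+1 = frob2 (W k.+2) * om k.+2.
Proof.
move=> hk; rewrite /om /omega big_ltn; last by rewrite !ltnS ltnW.
congr (_ * _); rewrite /frobW /=.
have -> : (k.+2 == m.+2) = false by apply/negbTE; rewrite eqSS; apply/eqP => E; move: hk; rewrite E ltnn.
by [].
Qed.

Lemma om_last : om m.+1 = frob2 WL.
Proof. by rewrite /om /omega big_nat1 /frobW /= eqxx. Qed.

Definition sl l := Num.sqrt (om l.+1) * Num.sqrt (frob2 (efix l)).

Variable B : R.
Hypothesis hB : 0 < B.
Hypothesis hLip : forall z1 z2 : R, `|sigma z1 - sigma z2| <= B * `|z1 - z2|.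

Lemma D_step k : Ufix k.+1 - c k.+2 = W k.+2 *m (act sigma (Ufix k) - act sigma (c k.+1)) + efix k.+1.
Proof. by rewrite /= mulmxBr !addrA subrK. Qed.

Lemma D_bound k : (k <= m)%N ->
  Num.sqrt (om k.+1) * Num.sqrt (frob2 (Ufix k - c k.+1)) <= \sum_(0 <= l < k.+1) B ^+ (k - l) * sl l.
Proof.
elim: k => [|k IH] hk.
  by rewrite big_nat1 subnn expr0 mul1r /sl.
rewrite big_nat_recr //= subnn expr0 mul1r D_step.
have IH' := IH (ltnW hk).
have w0 := sqrtr_ge0 (om k.+2).
apply: le_trans (_ : Num.sqrt (om k.+2) * (Num.sqrt (frob2 (W k.+2)) * (B * Num.sqrt (frob2 (Ufix k - c k.+1)))
    + Num.sqrt (frob2 (efix k.+1))) <= _).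
  apply: ler_wpM2l => //; apply: le_trans (F_add _ _) _; apply: lerD => //.
  apply: le_trans (frob_mul _ _) _; apply: ler_wpM2l; first exact: sqrtr_ge0.
  exact: act_lip.
have -> : Num.sqrt (om k.+2) * (Num.sqrt (frob2 (W k.+2)) * (B * Num.sqrt (frob2 (Ufix k - c k.+1)))
    + Num.sqrt (frob2 (efix k.+1))) = B * (Num.sqrt (om k.+1) * Num.sqrt (frob2 (Ufix k - c k.+1))) + sl k.+1.
  rewrite /sl (om_rec hk) sqrtrM ?frob2_ge0 //; ring.
apply: lerD => //.
apply: le_trans (_ : B * \sum_(0 <= l < k.+1) B ^+ (k - l) * sl l <= _).
  by apply: ler_wpM2l => //; exact: ltW.
rewrite mulr_sumr le_eqVlt; apply/orP; left; apply/eqP.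
apply: eq_big_nat => l /andP [_ hl].
by rewrite subSn // exprS mulrA.
Qed.

Lemma Delta_bound :
  Num.sqrt (frob2 (WL *m act sigma (Ufix m) - WL *m act sigma (c m.+1)))
  <= \sum_(0 <= l < m.+1) B ^+ (m.+1 - l) * sl l.
Proof.
rewrite -mulmxBr; apply: le_trans (frob_mul _ _) _.
apply: le_trans (_ : Num.sqrt (frob2 WL) * (B * Num.sqrt (frob2 (Ufix m - c m.+1))) <= _).
  by apply: ler_wpM2l; [exact: sqrtr_ge0| exact: act_lip].
have -> : Num.sqrt (frob2 WL) * (B * Num.sqrt (frob2 (Ufix m - c m.+1))) =
   B * (Num.sqrt (om m.+1) * Num.sqrt (frob2 (Ufix m - c m.+1))) by rewrite om_last; ring.
apply: le_trans (_ : B * \sum_(0 <= l < m.+1) B ^+ (m - l) * sl l <= _).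
  by apply: ler_wpM2l; [exact: ltW | exact: D_bound].
rewrite mulr_sumr le_eqVlt; apply/orP; left; apply/eqP.
apply: eq_big_nat => l /andP [_ hl].
by rewrite subSn // exprS mulrA.
Qed.

End Net.


Theorem theorem3p1 (R : realType) (L d M J N : nat)
  (hL : (2 <= L)%N) (hd : (1 <= d)%N) (hM : (1 <= M)%N) (hJ : (1 <= J)%N) (hN : (1 <= N)%N)
  (X : 'M[R]_(d, N)) (A : 'M[R]_(J, N))
  (hA : forall n : 'I_N, one_hot (col n A))
  (sigma : R -> R) (B : R) (hB : 0 < B)
  (hLip : forall z1 z2 : R, `|sigma z1 - sigma z2| <= B * `|z1 - z2|)
  (W1 : 'M[R]_(M, d)) (W : nat -> 'M[R]_M) (WL : 'M[R]_(J, M))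
  (b : nat -> 'cV[R]_M) (c : nat -> 'M[R]_(M, N)) :
  Lmean (phi_FNN_mx sigma L W1 W WL b X) A
  <= Num.max (Num.sqrt 2) (Num.max (2 * B) (2 * B ^+ (L - 1)))
     * Num.sqrt (L - 1)%:R * LS_FNN sigma L X A W1 W WL b c.
Proof.
have [m Lm] : exists m, L = m.+2 by exists (L - 2)%N; rewrite -addn2 subnK.
subst L.
have -> : (m.+2 - 1 = m.+1)%N by rewrite subn1.
rewrite /Lmean /LS_FNN (@phi_eq R d M J N m sigma X W1 W WL b).
set U := WL *m act sigma (Ufix sigma X W1 W b m).
set Z := WL *m act sigma (c m.+1).
set C := Num.max _ _.
set sN := Num.sqrt N%:R.
have N0 : 0 < N%:R :> R by rewrite ltr0n.
have sN0 : 0 < sN by rewrite sqrtr_gt0.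
set S := S_sep _ _ _ _ _ _ _ _ _.
set s0 := Num.sqrt (\sum_(n < N) Lvec Z A n ^+ 2).
set sl' := @sl R d M J N m sigma X W1 W WL b c.
pose q (n : 'I_N) := \sum_(j < J) (U j n - Z j n) ^+ 2.
have q0 : forall n, 0 <= q n by move=> n; apply: sumr_ge0 => j _; exact: sqr_ge0.
have hB1 : \sum_(n < N) Lvec U A n <= \sum_(n < N) Lvec Z A n + Num.sqrt 2 * \sum_(n < N) Num.sqrt (q n).
  rewrite mulr_sumr -big_split /=; apply: ler_sum => n _.
  rewrite /Lvec; apply: le_trans (ce_lip (col n Z) (col n U) hJ (hA n)) _.
  rewrite /q le_eqVlt; apply/orP; left; apply/eqP; congr (_ + _ * Num.sqrt _).
  by apply: eq_bigr => j _; rewrite !mxE.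
have hC1 : \sum_(n < N) Lvec Z A n <= sN * s0.
  have := CS (index_enum 'I_N) (fun _ => 1) (fun n => Lvec Z A n).
  by rewrite (eq_bigr (fun n => Lvec Z A n)) => [|n _]; rewrite ?mul1r // expr1n sumr_const card_ord.
have hD1 : \sum_(n < N) Num.sqrt (q n) <= sN * Num.sqrt (frob2 (U - Z)).
  have := CS (index_enum 'I_N) (fun _ => 1) (fun n => Num.sqrt (q n)).
  rewrite (eq_bigr (fun n => Num.sqrt (q n))) => [|n _]; last by rewrite mul1r.
  rewrite expr1n sumr_const card_ord => H; apply: le_trans H _.
  apply: ler_wpM2l; first exact: ltW.
  rewrite le_eqVlt; apply/orP; left; apply/eqP; congr Num.sqrt.
  rewrite /frob2 exchange_big; apply: eq_bigr => n _.
  by rewrite sqr_sqrtr // /q; apply: eq_bigr => j _; rewrite !mxE.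
have hE := @Delta_bound R d M J N m sigma X W1 W WL b c B hB hLip.
rewrite -/U -/Z -/sl' in hE.

set T := s0 + Num.sqrt 2 * \sum_(0 <= l < m.+1) B ^+ (m.+1 - l) * sl' l.
have s20 := sqrtr_ge0 (2 : R).
have hT : \sum_(n < N) Lvec U A n <= sN * T.
  apply: le_trans hB1 _; rewrite /T mulrDr; apply: lerD => //.
  rewrite mulrCA; apply: ler_wpM2l => //; apply: le_trans hD1 _.
  by apply: ler_wpM2l => //; exact: ltW.
have hCa : Num.sqrt 2 <= C by rewrite /C le_max lexx.
have hCb : 2 * B <= C by rewrite /C le_max le_max lexx orbT.
have hCc : 2 * B ^+ m.+1 <= C by rewrite /C le_max le_max lexx !orbT.
have C0 : 0 <= C by apply: le_trans hCa.
have e22 : Num.sqrt 2 ^+ 2 = 2 :> R by rewrite sqr_sqrtr.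
pose x l := if l == m.+1 then 1 else Num.sqrt 2 * B ^+ (m.+1 - l).
pose y l := if l == m.+1 then s0 else sl' l.
have e1 : T = \sum_(0 <= l < m.+2) x l * y l.
  rewrite big_nat_recr //= /x /y eqxx mul1r addrC /T mulr_sumr; congr (_ + _).
  by apply: eq_big_nat => l /andP[_ hl]; rewrite ltn_eqF // mulrA.
have CSi := CS (index_iota 0 m.+2) x y.
have e2a : s0 ^+ 2 = \sum_(n < N) Lvec Z A n ^+ 2.
  by rewrite sqr_sqrtr //; apply: sumr_ge0 => n _; exact: sqr_ge0.
have esl : forall l, sl' l ^+ 2 = om m W1 W WL l.+1 * frob2 (efix sigma X W1 W b c l).
  move=> l; rewrite /sl' /sl exprMn !sqr_sqrtr //; [exact: frob2_ge0 | exact: om_ge0].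
have e2 : \sum_(0 <= l < m.+2) y l ^+ 2 = S.
  rewrite big_nat_recr //= /y eqxx e2a.
  rewrite (eq_big_nat _ _ (F2 := fun l => sl' l ^+ 2)); last first.
    by move=> l /andP[_ hl]; rewrite ltn_eqF.
  rewrite big_ltn // big_add1 /= esl.
  rewrite /S /S_sep big_add1 /= big_add1 /=.
  have -> : \sum_(0 <= i < m) sl' i.+1 ^+ 2 =
     \sum_(0 <= i < m) omega m.+2 W1 W WL i.+2 *
        frob2 (W i.+2 *m act sigma (c i.+1) + b i.+2 *m ones_row R N - c i.+2).
    by apply: eq_bigr => i _; rewrite esl.
  rewrite /om /efix; lra.
have e3 : \sum_(0 <= l < m.+2) x l ^+ 2 <= C ^+ 2 * m.+1%:R.
  rewrite big_nat_recr //= /x eqxx expr1n big_nat_recr //= ltn_eqF // subSnn expr1.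
  have hlast : (Num.sqrt 2 * B) ^+ 2 + 1 <= C ^+ 2 by nra.
  have hsum : \sum_(0 <= i < m) (if i == m.+1 then 1 else Num.sqrt 2 * B ^+ (m.+1 - i)) ^+ 2
      <= \sum_(0 <= i < m) C ^+ 2.
    rewrite big_nat_cond [X in _ <= X]big_nat_cond; apply: ler_sum => i /andP[/andP[_ hi] _].
    rewrite ltn_eqF; last by apply: (leq_trans hi); rewrite leqW.
    have [v [hv1 hv2]] : exists v, B ^+ (m.+1 - i) <= v /\ 2 * v <= C.
      case: (lerP B 1) => hB1'.
        exists B; split => //; rewrite -[X in _ <= X]expr1; apply: ler_wiXn2l => //; first exact: ltW.
        by rewrite subn_gt0 ltnS ltnW.
      exists (B ^+ m.+1); split => //; apply: ler_weXn2l; [exact: ltW | exact: leq_subr].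
    have t0 : 0 <= B ^+ (m.+1 - i) by apply: exprn_ge0; exact: ltW.
    rewrite exprMn e22; nra.
  rewrite sumr_const_nat subn0 in hsum.
  have em2 : C ^+ 2 *+ m = C ^+ 2 * m%:R by rewrite mulr_natr.
  rewrite em2 in hsum.
  have em : m.+1%:R = m%:R + 1 :> R by rewrite natr1.
  rewrite em mulrDr mulr1.
  lra.
have hF : T <= C * Num.sqrt m.+1%:R * Num.sqrt S.
  rewrite e1; apply: le_trans CSi _; rewrite e2; apply: ler_wpM2r; first exact: sqrtr_ge0.
  apply: le_trans (_ : Num.sqrt (C ^+ 2 * m.+1%:R) <= _); first by rewrite ler_sqrt // mulr_ge0 ?sqr_ge0.
  by rewrite sqrtrM ?sqr_ge0 // sqrtr_sqr ger0_norm.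
have eN : N%:R = sN ^+ 2 :> R by rewrite sqr_sqrtr // ltW.
rewrite eN.
apply: le_trans (_ : (sN ^+ 2)^-1 * (sN * T) <= _).
  by apply: ler_wpM2l => //; rewrite invr_ge0 sqr_ge0.
have -> : (sN ^+ 2)^-1 * (sN * T) = sN^-1 * T by field; rewrite gt_eqF.
have -> : C * Num.sqrt m.+1%:R * (sN^-1 * Num.sqrt S) = sN^-1 * (C * Num.sqrt m.+1%:R * Num.sqrt S) by ring.
by apply: ler_wpM2l => //; rewrite invr_ge0 ltW.
Qed.
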